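(* If $(A,W)$ is a $T_1$ Pratt comonoid and $A_0$ is a finite subset of $A$, then for every subset $y\subseteq A_0$ there exists $x\in W$ with $x\cap A_0=y$.
   Context: A Pratt comonoid is a pair $(A,W)$ where $A$ is a set and $W$ is a set of subsets of $A$ such that (i) $\emptyset\in W$ and $A\in W$; (ii) whenever $C\subseteq A\times A$ is such that for every $a\in A$ both the $a$-th row $\{b\mid (a,b)\in C\}$ and the $a$-th column $\{b\mid (b,a)\in C\}$ belong to $W$ (a crossword over $W$), the diagonal $\{b\mid (b,b)\in C\}$ also belongs to $W$. $(A,W)$ is $T_1$ if for all distinct $a,b\in A$ some member of $W$ contains $a$ but not $b$. *)

(* Defs.v *)
(* Subsets of the carrier A are predicates A -> Prop;
   the carrier set itself is the whole type A. *)
From Stdlib Require Import List.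

Definition pratt_comonoid (A : Type) (W : (A -> Prop) -> Prop) : Prop :=
  W (fun _ => False) /\ W (fun _ => True) /\
  forall C : A -> A -> Prop,
    (forall a, W (fun b => C a b) /\ W (fun b => C b a)) ->
    W (fun b => C b b).

Definition pratt_T1 (A : Type) (W : (A -> Prop) -> Prop) : Prop :=
  forall a b : A, a <> b -> exists x, W x /\ x a /\ ~ x b.

Definition finite_subset (A : Type) (A0 : A -> Prop) : Prop :=
  exists l : list A, forall a, A0 a <-> In a l.

(* Main.v *)
Require Import Defs.
From Stdlib Require Import List Classical FunctionalExtensionality PropExtensionality.

Lemma W_ext (A : Type) (W : (A -> Prop) -> Prop) (U V : A -> Prop) :
  W U -> (forall b, U b <-> V b) -> W V.
Proof.
  intros HU H. replace V with U; auto.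
  apply functional_extensionality; intro b; apply propositional_extensionality; auto.
Qed.

Lemma W_inter (A : Type) (W : (A -> Prop) -> Prop) (HW : pratt_comonoid A W)
  (U V : A -> Prop) : W U -> W V -> W (fun b => U b /\ V b).
Proof.
  destruct HW as [H0 [H1 HC]]. intros HU HV.
  apply (HC (fun a b => U a /\ V b)). intro a. split.
  - destruct (classic (U a)).
    + apply (W_ext _ _ V); auto. firstorder.
    + apply (W_ext _ _ (fun _ => False)); auto. firstorder.
  - destruct (classic (V a)).
    + apply (W_ext _ _ U); auto. firstorder.
    + apply (W_ext _ _ (fun _ => False)); auto. firstorder.
Qed.

Lemma W_union (A : Type) (W : (A -> Prop) -> Prop) (HW : pratt_comonoid A W)
  (U V : A -> Prop) : W U -> W V -> W (fun b => U b \/ V b).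
Proof.
  destruct HW as [H0 [H1 HC]]. intros HU HV.
  apply (HC (fun a b => U a \/ V b)). intro a. split.
  - destruct (classic (U a)).
    + apply (W_ext _ _ (fun _ => True)); auto. firstorder.
    + apply (W_ext _ _ V); auto. firstorder.
  - destruct (classic (V a)).
    + apply (W_ext _ _ (fun _ => True)); auto. firstorder.
    + apply (W_ext _ _ U); auto. firstorder.
Qed.

Lemma sep (A : Type) (W : (A -> Prop) -> Prop) (HW : pratt_comonoid A W)
  (HT1 : pratt_T1 A W) (y : A -> Prop) (a : A) (Ha : y a) (L : list A) :
  exists x, W x /\ x a /\ forall b, In b L -> ~ y b -> ~ x b.
Proof.
  induction L as [|b L IH].
  - exists (fun _ => True). destruct HW as [_ [H1 _]]. simpl; intuition.
  - destruct IH as [x [Wx [xa Hx]]].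
    destruct (classic (y b)) as [yb|nyb].
    + exists x. split; [auto|split; [auto|]]. intros c [<-|Hc] nc; [contradiction|auto].
    + assert (a <> b) by (intro; subst; contradiction).
      destruct (HT1 a b H) as [z [Wz [za zb]]].
      exists (fun c => x c /\ z c). split; [apply W_inter; auto|].
      split; [auto|]. intros c [<-|Hc] nc [xc zc]; [contradiction|].
      exact (Hx c Hc nc xc).
Qed.

Theorem lemma3p1 (A : Type) (W : (A -> Prop) -> Prop)
  (HW : pratt_comonoid A W) (HT1 : pratt_T1 A W)
  (A0 : A -> Prop) (Hfin : finite_subset A A0)
  (y : A -> Prop) (Hy : forall a, y a -> A0 a) :
  exists x, W x /\ forall a, (x a /\ A0 a) <-> y a.
Proof.
  destruct Hfin as [L HL].
  assert (Hm : forall l, exists x, W x /\ (forall a, In a l -> y a -> x a)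
                 /\ (forall b, In b L -> ~ y b -> ~ x b)).
  { induction l as [|a l IH].
    - exists (fun _ => False). destruct HW as [H0 _]. simpl; intuition.
    - destruct IH as [x [Wx [H1 H2]]].
      destruct (classic (y a)) as [ya|nya].
      + destruct (sep A W HW HT1 y a ya L) as [z [Wz [za Hz]]].
        exists (fun c => x c \/ z c). split; [apply W_union; auto|].
        split.
        * intros c [<-|Hc] yc; auto.
        * intros c Hc nc [xc|zc]; [exact (H2 c Hc nc xc)|exact (Hz c Hc nc zc)].
      + exists x. split; [auto|split; [|auto]].
        intros c [<-|Hc] yc; [contradiction|auto]. }
  destruct (Hm L) as [x [Wx [H1 H2]]].
  exists x. split; auto. intro a. split.
  - intros [xa A0a]. apply NNPP. intro nya. apply (H2 a); auto. apply HL; auto.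
  - intro ya. split; auto. apply H1; auto. apply HL; auto.
Qed.
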